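(* Let $\Phi,\Psi:G\to[0,\infty)$ be continuous and let $\Lambda$ be relatively separated in $G$. Then \[\sum_{\lambda\in\Lambda}\Phi(\lambda^{-1}x)\Psi(y^{-1}\lambda)\le\frac{\mathrm{rel}(\Lambda)}{\mu_G(Q)}\,(M_Q\Psi*M_Q^R\Phi)(y^{-1}x)\quad\text{for all }x,y\in G,\] and \[\sum_{\lambda\in\Lambda}\Psi(y^{-1}\lambda)\le\frac{\mathrm{rel}(\Lambda)}{\mu_G(Q)}\|\Psi\|_{\mathcal{W}^L}\quad\text{for all }y\in G.\] Moreover, if $\Theta\in L^1(G)$ is continuous and $\Theta^\vee\in\mathcal{W}^L(G)$, then $D_{\Theta,\Lambda}:\ell^2(\Lambda)\to L^2(G)$, $(c_\lambda)_\lambda\mapsto\sum_{\lambda}c_\lambda L_\lambda\Theta$, is well defined and bounded with $\|D_{\Theta,\Lambda}\|_{\ell^2\to L^2}^2\le\frac{\mathrm{rel}(\Lambda)}{\mu_G(Q)}\|\Theta\|_{L^1}\|\Theta^\vee\|_{\mathcal{W}^L}$, and the defining series converges absolutely $\mu_G$-a.e. on $G$.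
   Context: $G$ is a $\sigma$-compact locally compact group with left Haar measure $\mu_G$; $Q$ a fixed symmetric open relatively compact neighborhood of $e$. $M_Qf(x)=\operatorname{ess\,sup}_{y\in xQ}|f(y)|$, $M_Q^Rf(x)=\operatorname{ess\,sup}_{y\in Qx}|f(y)|$; $*$ is convolution $(f*g)(x)=\int_Gf(y)g(y^{-1}x)\,d\mu_G(y)$. $\mathcal{W}^L(G)=\{f\in L^\infty_{\mathrm{loc}}(G):M_Qf\in L^1(G)\}$ with $\|f\|_{\mathcal{W}^L}=\|M_Qf\|_{L^1}$. $L_yf=f(y^{-1}\cdot)$, $f^\vee(x)=f(x^{-1})$. $\mathrm{rel}(\Lambda)=\sup_{x\in G}\#(\Lambda\cap xQ)$ (with multiplicity); $\Lambda$ is relatively separated if this is finite. *)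

(* Defs.v *)
From HB Require Import structures.
From mathcomp Require Import all_boot all_order all_algebra.
From mathcomp Require Import all_classical all_reals all_analysis.
From mathcomp Require Import measurable_realfun.
From mathcomp Require Import complex.
Set Implicit Arguments. Unset Strict Implicit. Unset Printing Implicit Defensive.
Import Order.TTheory GRing.Theory Num.Theory.
Import numFieldNormedType.Exports.
Local Open Scope classical_set_scope.
Local Open Scope ring_scope.

Notation Borel G := (g_sigma_algebraType (@open G)).

Section LCGroup.
Context {G : ptopologicalType}.
Variables (mul : G -> G -> G) (inv : G -> G) (e : G).

Definition lcsc_group : Prop :=
  (forall x y z, mul x (mul y z) = mul (mul x y) z) /\
  (forall x, mul e x = x /\ mul x e = x) /\
  (forall x, mul (inv x) x = e /\ mul x (inv x) = e) /\
  continuous (fun p : G * G => mul p.1 p.2) /\ continuous inv /\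
  hausdorff_space G /\
  locally_compact [set: G] /\
  (exists K : nat -> set G, (forall n, compact (K n)) /\ \bigcup_n K n = [set: G]).

Definition left_haar {R : realType} (mu : {measure set (Borel G) -> \bar R}) : Prop :=
  [/\ (forall (x : G) (A : set (Borel G)), measurable A -> mu (mul x @^-1` A) = mu A),
      (forall K : set G, compact K -> (mu K < +oo)%E),
      (forall U : set G, open U -> U !=set0 -> (0 < mu U)%E),
      (forall A : set (Borel G), measurable A ->
         mu A = ereal_inf [set mu U | U in [set U : set G | open U /\ A `<=` U]]) &
      (forall U : set G, open U ->
         mu U = ereal_sup [set mu K | K in [set K : set G | compact K /\ K `<=` U]])].

Definition good_nbhd (Q : set G) : Prop :=
  [/\ open Q, Q e, (forall x, Q x <-> Q (inv x)) & compact (closure Q)].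

Definition lcoset (x : G) (Q : set G) : set G := mul x @` Q.
Definition rcoset (Q : set G) (x : G) : set G := (fun q => mul q x) @` Q.

Context {R : realType} (mu : {measure set (Borel G) -> \bar R}).

Definition esssup_on (A : set G) (f : G -> R) : \bar R :=
  ereal_inf [set t : \bar R | \forall z \ae mu, A z -> ((`|f z|)%:E <= t)%E].

Definition MQ (Q : set G) (f : G -> R) (x : G) : \bar R := esssup_on (lcoset x Q) f.
Definition MQR (Q : set G) (f : G -> R) (x : G) : \bar R := esssup_on (rcoset Q x) f.

Definition haar_conv (f g : G -> \bar R) (x : G) : \bar R :=
  (\int[mu]_y (f y * g (mul (inv y) x)))%E.

Definition WLnorm (Q : set G) (f : G -> R) : \bar R := (\int[mu]_x MQ Q f x)%E.

Definition in_WL (Q : set G) (f : G -> R) : Prop :=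
  [/\ measurable_fun [set: Borel G] f,
      (forall K : set G, compact K -> (esssup_on K f < +oo)%E),
      measurable_fun [set: Borel G] (MQ Q f : Borel G -> \bar R) &
      (WLnorm Q f < +oo)%E].
End LCGroup.

(* rel(Lambda) = sup_x #(Lambda cap xQ), counted with multiplicity;
   Lambda is given as a family lam indexed by I. *)
Definition rel_sep {R : realType} {G : ptopologicalType} (mul : G -> G -> G)
  (Q : set G) {I : choiceType} (lam : I -> G) : \bar R :=
  ereal_sup (range (fun x : G => \esum_(i in [set i | lcoset mul x Q (lam i)]) (1%E : \bar R))).

Definition cmeasurable {R : realType} {G : ptopologicalType} (f : G -> R[i]) : Prop :=
  measurable_fun [set: Borel G] (fun x => complex.Re (f x)) /\
  measurable_fun [set: Borel G] (fun x => complex.Im (f x)).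

Definition ccontinuous {R : realType} {G : ptopologicalType} (f : G -> R[i]) : Prop :=
  continuous (fun x => complex.Re (f x)) /\ continuous (fun x => complex.Im (f x)).

Definition cabs {R : realType} (z : R[i]) : R :=
  Num.sqrt (complex.Re z ^+ 2 + complex.Im z ^+ 2).

Definition rsum {R : realType} {I : choiceType} (f : I -> R) : R :=
  fine (\esum_(i in [set: I]) (Num.max (f i) 0)%:E) -
  fine (\esum_(i in [set: I]) (Num.max (- f i) 0)%:E).

Definition csum {R : realType} {I : choiceType} (f : I -> R[i]) : R[i] :=
  Complex (rsum (fun i => complex.Re (f i))) (rsum (fun i => complex.Im (f i))).

(* Main.v *)
Require Import Defs.
From HB Require Import structures.
From mathcomp Require Import all_boot all_order all_algebra.
From mathcomp Require Import all_classical all_reals all_analysis.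
From mathcomp Require Import measurable_realfun.
From mathcomp Require Import complex.
Import Order.TTheory GRing.Theory Num.Theory.
Import numFieldNormedType.Exports.
Local Open Scope classical_set_scope.
Local Open Scope ring_scope.

From mathcomp Require Import ring lra.
Set Implicit Arguments. Unset Strict Implicit.

Section Grp.
Variables (G : ptopologicalType) (mul : G -> G -> G) (inv : G -> G) (e : G).
Hypothesis HG : lcsc_group mul inv e.

Lemma gA x y z : mul x (mul y z) = mul (mul x y) z.
Proof. by case: HG. Qed.
Lemma g1l x : mul e x = x.
Proof. by case: HG => _ [H _]; case: (H x). Qed.
Lemma g1r x : mul x e = x.
Proof. by case: HG => _ [H _]; case: (H x). Qed.
Lemma gVl x : mul (inv x) x = e.
Proof. by case: HG => _ [_ [H _]]; case: (H x). Qed.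
Lemma gVr x : mul x (inv x) = e.
Proof. by case: HG => _ [_ [H _]]; case: (H x). Qed.
Lemma gK x y : mul (inv x) (mul x y) = y.
Proof. by rewrite gA gVl g1l. Qed.
Lemma gKV x y : mul x (mul (inv x) y) = y.
Proof. by rewrite gA gVr g1l. Qed.
Lemma gKr x y : mul (mul y x) (inv x) = y.
Proof. by rewrite -gA gVr g1r. Qed.
Lemma gKVr x y : mul (mul y (inv x)) x = y.
Proof. by rewrite -gA gVl g1r. Qed.
Lemma gcancel x y z : mul x y = mul x z -> y = z.
Proof. by move=> H; rewrite -(gK x y) H gK. Qed.
Lemma ginvK x : inv (inv x) = x.
Proof. by apply: (@gcancel (inv x)); rewrite gVr gVl. Qed.
Lemma ginvM x y : inv (mul x y) = mul (inv y) (inv x).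
Proof. by apply: (@gcancel (mul x y)); rewrite gVr -gA gKV gVr. Qed.

Lemma cont_mull a : continuous (mul a).
Proof.
case: HG => _ [_ [_ [Hm _]]] x.
have := Hm (a, x) => /= Hax.
apply: (@cvg_comp _ _ _ (fun z => (a, z)) (fun p : G * G => mul p.1 p.2) _ _ _ _ Hax).
by apply: cvg_pair; [exact: cvg_cst|exact: cvg_id].
Qed.

Lemma cont_mulr a : continuous (fun z => mul z a).
Proof.
case: HG => _ [_ [_ [Hm _]]] x.
have := Hm (x, a) => /= Hax.
apply: (@cvg_comp _ _ _ (fun z => (z, a)) (fun p : G * G => mul p.1 p.2) _ _ _ _ Hax).
by apply: cvg_pair; [exact: cvg_id|exact: cvg_cst].
Qed.

Lemma cont_inv : continuous inv.
Proof. by case: HG => _ [_ [_ [_ [H _]]]]. Qed.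

End Grp.
Section Ess.
Variables (R : realType) (G : ptopologicalType).
Variable (mu : {measure set (Borel G) -> \bar R}).
Hypothesis Hpos : forall U : set G, open U -> U !=set0 -> (0 < mu U)%E.

Lemma open_meas (U : set G) : open U -> measurable (U : set (Borel G)).
Proof. by move=> oU; apply: sub_sigma_algebra. Qed.

Lemma esssup_ge (f : G -> R) (A : set G) z : continuous f -> open A -> A z ->
  ((`|f z|)%:E <= esssup_on mu A f)%E.
Proof.
move=> cf oA Az; apply/ereal_infP => t /= Hae.
case: Hae => N [mN muN sub].
rewrite leNgt; apply/negP => tlt.
set V := A `&` [set z' | (t < (`|f z'|)%:E)%E].
have oV : open V.
  rewrite /V; clear V; apply: openI => //; move: tlt; case: t {sub} => [r| |] //= tlt.
    have -> : [set z' | (r%:E < (`|f z'|)%:E)%E] = (fun z => `|f z|) @^-1` `]r, +oo[.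
      by apply/seteqP; split => x /=; rewrite lte_fin in_itv /= andbT.
    apply: open_comp; last exact: rray_open.
    move=> x _; apply: continuous_comp; [exact: cf|exact: norm_continuous].
  have -> : [set z' | (-oo < (`|f z'|)%:E)%E] = setT.
    by apply/seteqP; split => x //= _; rewrite ltNye.
  exact: openT.
have : (0 < mu V)%E by apply: Hpos => //; exists z.
have : (mu V <= mu N)%E.
  apply: le_measure; rewrite ?inE //; first exact: open_meas.
  move=> x [Ax tx]; apply: sub => /= H; move: (H Ax); rewrite leNgt tx //.
by rewrite muN => /le_lt_trans H /H; rewrite ltxx.
Qed.
End Ess.

Lemma le_int_nm d (T : measurableType d) (R : realType) (mu : {measure set T -> \bar R})
  (f g : T -> \bar R) : (forall x, (0 <= f x)%E) -> (forall x, (f x <= g x)%E) ->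
  (\int[mu]_x f x <= \int[mu]_x g x)%E.
Proof.
move=> f0 fg.
have g0 x : (0 <= g x)%E by apply: le_trans (fg x).
rewrite (ge0_integralTE mu f0) (ge0_integralTE mu g0) /=.
apply/ereal_supP => _ [h hf <-]; apply: ereal_sup_ubound; exists h => //.
by move=> x; apply: le_trans (fg x).
Qed.

Section Ctbl.
Variables (R : realType) (I : choiceType) (h : I -> nat).
Hypothesis hinj : injective h.
Local Open Scope ereal_scope.

Definition ser (a : I -> \bar R) (n : nat) : \bar R :=
  match pselect (exists i, h i = n) with
  | left P => a (projT1 (cid P))
  | right _ => 0
  end.

Lemma ser_h (a : I -> \bar R) i : ser a (h i) = a i.
Proof.
rewrite /ser; case: pselect => [P|]; last by case; exists i.
by case: (cid P) => j /= /hinj ->.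
Qed.

Lemma ser_ge0 (a : I -> \bar R) : (forall i, 0 <= a i) -> forall n, 0 <= ser a n.
Proof. by move=> a0 n; rewrite /ser; case: pselect. Qed.

Lemma esum_ser (a : I -> \bar R) : (forall i, 0 <= a i) ->
  \esum_(i in [set: I]) a i = \sum_(n <oo) ser a n.
Proof.
move=> a0; rewrite nneseries_esumT; last exact: ser_ge0.
transitivity (\esum_(j in h @` [set: I]) ser a j); last first.
  rewrite esum_mkcond; apply: eq_esum => n _.
  case: ifPn => //; rewrite notin_setE /= => nh.
  rewrite /ser; case: pselect => // P; exfalso; case: P => i hi; apply: nh; by exists i.
rewrite esum_image; last by move=> i j _ _; exact: hinj.
by apply: eq_esum => i _; rewrite ser_h.
Qed.



Lemma esumZ (k : R) (a : I -> \bar R) : (0 <= k)%R -> (forall i, 0 <= a i) ->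
  \esum_(i in [set: I]) (k%:E * a i) = k%:E * \esum_(i in [set: I]) a i.
Proof.
move=> k0 a0; rewrite !esum_ser //; last by move=> i; rewrite mule_ge0.
rewrite -nneseriesZl; last by move=> n _; exact: ser_ge0.
apply: eq_eseriesr => n _; rewrite /ser; case: pselect => //= _; by rewrite mule0.
Qed.

Variables (d : measure_display) (T : measurableType d).

Lemma ser_measurable (f : I -> T -> \bar R) n :
  (forall i, measurable_fun setT (f i)) -> measurable_fun setT (fun x => ser (f^~ x) n).
Proof. by move=> mf; rewrite /ser; case: pselect. Qed.

Lemma esum_measurable (f : I -> T -> \bar R) :
  (forall i x, 0 <= f i x) -> (forall i, measurable_fun setT (f i)) ->
  measurable_fun setT (fun x => \esum_(i in [set: I]) f i x).
Proof.
move=> f0 mf.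
have -> : (fun x => \esum_(i in [set: I]) f i x) = (fun x => \sum_(n <oo | n \in (predT : pred nat)) ser (f^~ x) n).
  by apply: funext => x; rewrite esum_ser.
apply: ge0_emeasurable_sum => //.
  by move=> k x _ _; exact: ser_ge0.
by move=> k _; exact: ser_measurable.
Qed.

Lemma integral_esum (mu : {measure set T -> \bar R}) (f : I -> T -> \bar R) :
  (forall i x, 0 <= f i x) -> (forall i, measurable_fun setT (f i)) ->
  \int[mu]_x (\esum_(i in [set: I]) f i x) = \esum_(i in [set: I]) \int[mu]_x f i x.
Proof.
move=> f0 mf.
under eq_integral do rewrite esum_ser //.
rewrite integral_nneseries //; last 2 first.
  by move=> n; exact: ser_measurable.
  by move=> n x _; exact: ser_ge0.
rewrite esum_ser; last by move=> i; apply: integral_ge0 => x _.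
apply: eq_eseriesr => n _; rewrite /ser; case: pselect => // _.
by rewrite integral0.
Qed.
End Ctbl.

Section Rs.
Variables (R : realType) (I : choiceType) (h : I -> nat).
Hypothesis hinj : injective h.

Lemma maxpn (x : R) : Num.max x 0 - Num.max (- x) 0 = x.
Proof. rewrite !maxEle; case: (lerP x 0) => H1; case: (lerP (-x) 0) => H2; lra. Qed.

Lemma maxp_le (x p n : R) : 0 <= p -> 0 <= n -> x = p - n -> Num.max x 0 <= p.
Proof. move=> p0 n0 ->; rewrite maxEle; case: (lerP (p - n) 0) => H1; lra. Qed.

Lemma maxp_ge0 (x : R) : 0 <= Num.max x 0.
Proof. by rewrite le_max lexx orbT. Qed.

Lemma maxp_abs (x : R) : Num.max x 0 <= `|x|.
Proof. by rewrite ge_max normr_ge0 andbT ler_norm. Qed.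

Lemma maxn_abs (x : R) : Num.max (- x) 0 <= `|x|.
Proof. by rewrite ge_max normr_ge0 andbT -normrN ler_norm. Qed.

Local Open Scope ereal_scope.

Lemma esum_fin_le (a b : I -> R) : (forall i, 0 <= a i)%R -> (forall i, a i <= b i)%R ->
  \esum_(i in [set: I]) (b i)%:E < +oo -> \esum_(i in [set: I]) (a i)%:E < +oo.
Proof.
by move=> a0 ab; apply: le_lt_trans; apply: le_esum => i _; rewrite lee_fin.
Qed.

Lemma esum_fineK (a : I -> R) : (forall i, 0 <= a i)%R ->
  \esum_(i in [set: I]) (a i)%:E < +oo ->
  (fine (\esum_(i in [set: I]) (a i)%:E))%:E = \esum_(i in [set: I]) (a i)%:E.
Proof.
move=> a0 fa; rewrite fineK // ge0_fin_numE //; apply: esum_ge0 => i _.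
by rewrite lee_fin.
Qed.

Lemma fine_esum_ge0 (a : I -> R) : (forall i, 0 <= a i)%R ->
  (0 <= fine (\esum_(i in [set: I]) (a i)%:E))%R.
Proof. by move=> a0; apply: fine_ge0; apply: esum_ge0 => i _; rewrite lee_fin. Qed.

Lemma fine_esumD (a b : I -> R) : (forall i, 0 <= a i)%R -> (forall i, 0 <= b i)%R ->
  \esum_(i in [set: I]) (a i)%:E < +oo -> \esum_(i in [set: I]) (b i)%:E < +oo ->
  fine (\esum_(i in [set: I]) (a i + b i)%:E) =
  (fine (\esum_(i in [set: I]) (a i)%:E) + fine (\esum_(i in [set: I]) (b i)%:E))%R.
Proof.
move=> a0 b0 fa fb.
rewrite (eq_esum (b := fun i => (a i)%:E + (b i)%:E)) //.
rewrite esumD; [|by move=> i _; rewrite lee_fin..].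
by rewrite -(esum_fineK a0 fa) -(esum_fineK b0 fb).
Qed.

Lemma fine_esumZ (k : R) (a : I -> R) : (0 <= k)%R -> (forall i, 0 <= a i)%R ->
  \esum_(i in [set: I]) (a i)%:E < +oo ->
  fine (\esum_(i in [set: I]) (k * a i)%:E) = (k * fine (\esum_(i in [set: I]) (a i)%:E))%R.
Proof.
move=> k0 a0 fa.
rewrite (eq_esum (b := fun i => k%:E * (a i)%:E)) //.
rewrite (esumZ hinj k0); last by move=> i; rewrite lee_fin.
by rewrite -(esum_fineK a0 fa).
Qed.

Lemma rsum_decomp (u p n : I -> R) : (forall i, 0 <= p i)%R -> (forall i, 0 <= n i)%R ->
  \esum_(i in [set: I]) (p i)%:E < +oo -> \esum_(i in [set: I]) (n i)%:E < +oo ->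
  (forall i, u i = p i - n i)%R ->
  rsum u = (fine (\esum_(i in [set: I]) (p i)%:E) - fine (\esum_(i in [set: I]) (n i)%:E))%R.
Proof.
move=> p0 n0 fp fn hu.
have up i : (Num.max (u i) 0 <= p i)%R by apply: (maxp_le (n := n i)).
have un i : (Num.max (- u i) 0 <= n i)%R.
  by apply: (maxp_le (n := p i)) => //; rewrite hu opprB.
have fup := esum_fin_le (fun i => maxp_ge0 (u i)) up fp.
have fun_ := esum_fin_le (fun i => maxp_ge0 (- u i)) un fn.
have E i : (Num.max (u i) 0 + n i = Num.max (- u i) 0 + p i)%R.
  by have := maxpn (u i); rewrite hu; lra.
have := fine_esumD (fun i => maxp_ge0 (u i)) n0 fup fn.
rewrite (eq_esum (b := fun i => (Num.max (- u i) 0 + p i)%:E)); last by move=> i _; rewrite E.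
rewrite fine_esumD //; last by move=> i; exact: maxp_ge0.
rewrite /rsum; lra.
Qed.

Definition summ (u : I -> R) := \esum_(i in [set: I]) (`|u i|)%:E < +oo.

Lemma summ_pos u : summ u -> \esum_(i in [set: I]) (Num.max (u i) 0)%:E < +oo.
Proof. by apply: esum_fin_le => i; [exact: maxp_ge0|exact: maxp_abs]. Qed.

Lemma summ_neg u : summ u -> \esum_(i in [set: I]) (Num.max (- u i) 0)%:E < +oo.
Proof. by apply: esum_fin_le => i; [exact: maxp_ge0|exact: maxn_abs]. Qed.

Lemma rsumD (u v : I -> R) : summ u -> summ v -> rsum (fun i => u i + v i)%R = (rsum u + rsum v)%R.
Proof.
move=> su sv.
rewrite (@rsum_decomp _ (fun i => Num.max (u i) 0 + Num.max (v i) 0)%R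
   (fun i => Num.max (- u i) 0 + Num.max (- v i) 0)%R).
- rewrite (fine_esumD (fun i => maxp_ge0 (u i)) (fun i => maxp_ge0 (v i)) (summ_pos su) (summ_pos sv)).
  rewrite (fine_esumD (fun i => maxp_ge0 (- u i)) (fun i => maxp_ge0 (- v i)) (summ_neg su) (summ_neg sv)).
  by rewrite /rsum; lra.
- by move=> i; rewrite addr_ge0 ?maxp_ge0.
- by move=> i; rewrite addr_ge0 ?maxp_ge0.
- apply: (@esum_fin_le _ (fun i => `|u i| + `|v i|)%R).
    by move=> i; rewrite addr_ge0 ?maxp_ge0.
    by move=> i; rewrite lerD ?maxp_abs.
  rewrite (eq_esum (b := fun i => (`|u i|)%:E + (`|v i|)%:E)) //.
  by rewrite esumD ?lte_add_pinfty // => i _; rewrite lee_fin.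
- apply: (@esum_fin_le _ (fun i => `|u i| + `|v i|)%R).
    by move=> i; rewrite addr_ge0 ?maxp_ge0.
    by move=> i; rewrite lerD ?maxn_abs.
  rewrite (eq_esum (b := fun i => (`|u i|)%:E + (`|v i|)%:E)) //.
  by rewrite esumD ?lte_add_pinfty // => i _; rewrite lee_fin.
- by move=> i; have := maxpn (u i); have := maxpn (v i); lra.
Qed.

Lemma rsumZ (k : R) (u : I -> R) : summ u -> rsum (fun i => k * u i)%R = (k * rsum u)%R.
Proof.
move=> su; case: (lerP 0 k) => k0.
  rewrite (@rsum_decomp _ (fun i => k * Num.max (u i) 0)%R (fun i => k * Num.max (- u i) 0)%R).
  - rewrite (fine_esumZ k0 (fun i => maxp_ge0 (u i)) (summ_pos su)).
    rewrite (fine_esumZ k0 (fun i => maxp_ge0 (- u i)) (summ_neg su)).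
    by rewrite /rsum; lra.
  - by move=> i; rewrite mulr_ge0 ?maxp_ge0.
  - by move=> i; rewrite mulr_ge0 ?maxp_ge0.
  - apply: (@esum_fin_le _ (fun i => k * `|u i|)%R).
      by move=> i; rewrite mulr_ge0 ?maxp_ge0.
      by move=> i; rewrite ler_wpM2l ?maxp_abs.
    rewrite (eq_esum (b := fun i => k%:E * (`|u i|)%:E)) //.
    by rewrite (esumZ hinj) ?lte_mul_pinfty // => i; rewrite lee_fin.
  - apply: (@esum_fin_le _ (fun i => k * `|u i|)%R).
      by move=> i; rewrite mulr_ge0 ?maxp_ge0.
      by move=> i; rewrite ler_wpM2l ?maxn_abs.
    rewrite (eq_esum (b := fun i => k%:E * (`|u i|)%:E)) //.
    by rewrite (esumZ hinj) ?lte_mul_pinfty // => i; rewrite lee_fin.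
  - by move=> i; have := maxpn (u i); rewrite -mulrBr => ->.
have k0' : (0 <= - k)%R by lra.
rewrite (@rsum_decomp _ (fun i => - k * Num.max (- u i) 0)%R (fun i => - k * Num.max (u i) 0)%R).
- rewrite (fine_esumZ k0' (fun i => maxp_ge0 (u i)) (summ_pos su)).
  rewrite (fine_esumZ k0' (fun i => maxp_ge0 (- u i)) (summ_neg su)).
  by rewrite /rsum; lra.
- by move=> i; rewrite mulr_ge0 ?maxp_ge0.
- by move=> i; rewrite mulr_ge0 ?maxp_ge0.
- apply: (@esum_fin_le _ (fun i => - k * `|u i|)%R).
    by move=> i; rewrite mulr_ge0 ?maxp_ge0.
    by move=> i; rewrite ler_wpM2l ?maxn_abs.
  rewrite (eq_esum (b := fun i => (- k)%:E * (`|u i|)%:E)) //.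
  by rewrite (esumZ hinj) ?lte_mul_pinfty // => i; rewrite lee_fin.
- apply: (@esum_fin_le _ (fun i => - k * `|u i|)%R).
    by move=> i; rewrite mulr_ge0 ?maxp_ge0.
    by move=> i; rewrite ler_wpM2l ?maxp_abs.
  rewrite (eq_esum (b := fun i => (- k)%:E * (`|u i|)%:E)) //.
  by rewrite (esumZ hinj) ?lte_mul_pinfty // => i; rewrite lee_fin.
- by move=> i; rewrite -{1}(maxpn (u i)); ring.
Qed.

Lemma rsum_le (u : I -> R) : summ u -> (rsum u <= fine (\esum_(i in [set: I]) (`|u i|)%:E))%R.
Proof.
move=> su; rewrite /rsum.
have := fine_esum_ge0 (fun i => maxp_ge0 (- u i)).
have : (fine (\esum_(i in [set: I]) (Num.max (u i) 0)%:E) <= fine (\esum_(i in [set: I]) (`|u i|)%:E))%R.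
  apply: fine_le; rewrite ?ge0_fin_numE ?esum_ge0 ?summ_pos //; try by move=> i _; rewrite lee_fin ?maxp_ge0.
  by apply: le_esum => i _; rewrite lee_fin maxp_abs.
lra.
Qed.

Lemma esumZ_fin (k : R) (m : I -> R) : (0 <= k)%R -> (forall i, 0 <= m i)%R ->
  \esum_(i in [set: I]) (m i)%:E < +oo -> \esum_(i in [set: I]) (k * m i)%:E < +oo.
Proof.
move=> k0 m0 fm; rewrite (eq_esum (b := fun i => k%:E * (m i)%:E)) //.
rewrite (esumZ hinj k0); last by move=> i; rewrite lee_fin.
by rewrite -(esum_fineK m0 fm) -EFinM ltry.
Qed.

Lemma summ_le (w m : I -> R) (k : R) : (0 <= k)%R -> (forall i, 0 <= m i)%R ->
  \esum_(i in [set: I]) (m i)%:E < +oo -> (forall i, `|w i| <= k * m i)%R -> summ w.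
Proof.
move=> k0 m0 fm wm; apply: (@esum_fin_le _ (fun i => k * m i)%R) => //.
by apply: esumZ_fin.
Qed.
End Rs.

Section Cx.
Variables (R : realType) (I : choiceType) (h : I -> nat).
Hypothesis hinj : injective h.

Lemma cabs_ge0 (z : R[i]) : 0 <= cabs z.
Proof. exact: sqrtr_ge0. Qed.

Lemma cabs_sqr (z : R[i]) : cabs z ^+ 2 = complex.Re z ^+ 2 + complex.Im z ^+ 2.
Proof. by rewrite /cabs sqr_sqrtr // addr_ge0 // sqr_ge0. Qed.

Lemma Re_le (z : R[i]) : `|complex.Re z| <= cabs z.
Proof. by rewrite -sqrtr_sqr /cabs ler_sqrt ?addr_ge0 ?sqr_ge0 // lerDl sqr_ge0. Qed.

Lemma Im_le (z : R[i]) : `|complex.Im z| <= cabs z.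
Proof. by rewrite -sqrtr_sqr /cabs ler_sqrt ?addr_ge0 ?sqr_ge0 // lerDr sqr_ge0. Qed.

Lemma CS2 (A B u v : R) :
  `|A * u + B * v| <= Num.sqrt (A ^+ 2 + B ^+ 2) * Num.sqrt (u ^+ 2 + v ^+ 2).
Proof.
rewrite -sqrtr_sqr -sqrtrM ?addr_ge0 ?sqr_ge0 // ler_sqrt ?mulr_ge0 ?addr_ge0 ?sqr_ge0 //.
have := sqr_ge0 (A * v - B * u); lra.
Qed.

Lemma csum_bound (z : I -> R[i]) : (\esum_(i in [set: I]) (cabs (z i))%:E < +oo)%E ->
  cabs (csum z) <= fine (\esum_(i in [set: I]) (cabs (z i))%:E).
Proof.
move=> fz.
have z0 i : 0 <= cabs (z i) by exact: cabs_ge0.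
set X := fine _.
have X0 : 0 <= X by apply: fine_esum_ge0.
pose u i := complex.Re (z i); pose v i := complex.Im (z i).
have su : summ u by apply: (summ_le hinj (k:=1) (m := fun i => cabs (z i))) => // i; rewrite mul1r Re_le.
have sv : summ v by apply: (summ_le hinj (k:=1) (m := fun i => cabs (z i))) => // i; rewrite mul1r Im_le.
set A := rsum u; set B := rsum v.
have -> : cabs (csum z) = Num.sqrt (A ^+ 2 + B ^+ 2) by [].
set c := Num.sqrt _.
have c0 : 0 <= c by exact: sqrtr_ge0.
have cc : c * c = A * A + B * B by rewrite -expr2 sqr_sqrtr ?addr_ge0 ?sqr_ge0 // !expr2.
have sw : summ (fun i => A * u i + B * v i).
  apply: (summ_le hinj (k:=c) (m := fun i => cabs (z i))) => // i.
  exact: (CS2 A B (u i) (v i)).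
have sAu : summ (fun i => A * u i).
  by apply: (summ_le hinj (k:=`|A|) (m := fun i => cabs (z i))) => // i; rewrite normrM ler_wpM2l // Re_le.
have sBv : summ (fun i => B * v i).
  by apply: (summ_le hinj (k:=`|B|) (m := fun i => cabs (z i))) => // i; rewrite normrM ler_wpM2l // Im_le.
have key : c * c <= c * X.
  rewrite cc {1}/A {1}/B -(rsumZ hinj A su) -(rsumZ hinj B sv) -(rsumD sAu sBv).
  apply: le_trans (rsum_le sw) _.
  rewrite -(fine_esumZ hinj) //; apply: fine_le.
  - by rewrite ge0_fin_numE ?esum_ge0 // => i _; rewrite lee_fin.
  - rewrite ge0_fin_numE ?esum_ge0 //; last by move=> i _; rewrite lee_fin mulr_ge0.
    exact: (esumZ_fin hinj).
  apply: le_esum => i _; rewrite lee_fin.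
  exact: (CS2 A B (u i) (v i)).
case: (eqVneq c 0) => [->|cn0] //.
by rewrite -(ler_pM2l (x:=c)) // lt_neqAle eq_sym cn0 c0.
Qed.
End Cx.

Lemma cabsM (R : realType) (a b : R[i]) : cabs (a * b) = cabs a * cabs b.
Proof.
case: a => a1 a2; case: b => b1 b2; rewrite /cabs /= -sqrtrM ?addr_ge0 ?sqr_ge0 //.
congr Num.sqrt; ring.
Qed.

Lemma amgm_sq (R : realType) (X B T : R) : 0 <= X -> 0 <= B -> 0 <= T ->
  (forall t, 0 < t -> 2 * X <= t * B + T / t) -> X ^+ 2 <= B * T.
Proof.
move=> X0 B0 T0 H.
case: (eqVneq X 0) => [->|Xn0]; first by rewrite expr0n /= mulr_ge0.
have Xp : 0 < X by rewrite lt_neqAle eq_sym Xn0 X0.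
case: (eqVneq B 0) => [B00|Bn0].
  have := H ((T + 1) / X) (divr_gt0 (ltr_wpDl T0 ltr01) Xp).
  rewrite B00 mulr0 add0r invf_div mulrA ler_pdivlMr; last by rewrite ltr_wpDl.
  nra.
have Bp : 0 < B by rewrite lt_neqAle eq_sym Bn0 B0.
have := H (X / B) (divr_gt0 Xp Bp).
rewrite divfK // invf_div mulrA => H2.
have : X <= T * B / X by lra.
rewrite ler_pdivlMr // => H3; rewrite expr2 mulrC; nra.
Qed.

Lemma amgm_pt (R : realType) (y a t : R) : 0 <= a -> 0 < t -> 2 * (y * a) <= t * a + y ^+ 2 * a / t.
Proof.
move=> a0 t0.
have : 0 <= a * (t - y) ^+ 2 / t by apply: divr_ge0; [apply: mulr_ge0 => //; exact: sqr_ge0 | exact: ltW].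
have E : a * (t - y) ^+ 2 / t = t * a + y ^+ 2 * a / t - 2 * (y * a).
  by field; apply: lt0r_neq0.
rewrite E; lra.
Qed.

Lemma bnd_pt (R : realType) (y a B : R) : 0 <= a -> a <= B -> 0 <= y -> y * a <= a + B * y ^+ 2.
Proof. move=> a0 aB y0; have := sqr_ge0 (y - 1); nra. Qed.

Lemma cabs_cont (R : realType) (G : ptopologicalType) (f : G -> R[i]) :
  ccontinuous f -> continuous (fun x => cabs (f x)).
Proof.
move=> [cr ci] x.
apply: (@continuous_comp _ _ _ (fun x => complex.Re (f x) * complex.Re (f x) + complex.Im (f x) * complex.Im (f x)) (@Num.sqrt R)).
  by apply: cvgD; apply: cvgM; (apply: cr || apply: ci).
exact: sqrt_continuous.
Qed.

Lemma cabs_meas (R : realType) d (T : measurableType d) (fr fi : T -> R) :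
  measurable_fun setT fr -> measurable_fun setT fi ->
  measurable_fun setT (fun x => Num.sqrt (fr x ^+ 2 + fi x ^+ 2)).
Proof.
move=> mr mi.
apply: (@measurableT_comp _ _ _ _ _ _ (@Num.sqrt R)).
  by apply: continuous_measurable_fun; exact: sqrt_continuous.
by apply: (@measurable_funD _ _ _ _ (fun x => fr x * fr x) (fun x => fi x * fi x)); apply: measurable_funM.
Qed.


Section Part1.
Variables (R : realType) (G : ptopologicalType) (mul : G -> G -> G) (inv : G -> G) (e : G)
  (mu : {measure set (Borel G) -> \bar R}) (Q : set G) (I : choiceType) (lam : I -> G).
Hypotheses (HG : lcsc_group mul inv e) (HH : left_haar mul mu) (HQ : good_nbhd inv e Q)
  (Hrel : (rel_sep (R:=R) mul Q lam < +oo)%E).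

Let Hpos : forall U : set G, open U -> U !=set0 -> (0 < mu U)%E.
Proof. by case: HH. Qed.
Let Hinv : forall (x : G) (A : set (Borel G)), measurable A -> mu (mul x @^-1` A) = mu A.
Proof. by case: HH. Qed.
Let oQ : open Q. Proof. by case: HQ. Qed.
Let Qe : Q e. Proof. by case: HQ. Qed.
Let Qsym x : Q x <-> Q (inv x). Proof. by case: HQ => _ _ H _; exact: H. Qed.
Let mQ : measurable (Q : set (Borel G)). Proof. exact: open_meas. Qed.

Lemma muQ_pos : (0 < mu Q)%E.
Proof. by apply: Hpos => //; exists e. Qed.

Lemma muQ_fin : mu Q \is a fin_num.
Proof.
rewrite ge0_fin_numE ?measure_ge0 //.
case: HQ => _ _ _ cQ.
case: HH => _ Hc _ _ _.
apply: le_lt_trans (Hc _ cQ).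
apply: le_measure; rewrite ?inE //.
have: closed (closure Q) by exact: closed_closure.
rewrite -openC => /open_meas /measurableC; by rewrite setCK.
exact: subset_closure.
Qed.

Definition rr := fine (rel_sep (R:=R) mul Q lam).
Definition mq := fine (mu Q).

Lemma rel_ge0 : (0 <= rel_sep (R:=R) mul Q lam)%E.
Proof.
rewrite /rel_sep; apply: le_trans (ereal_sup_ubound _); last by exists e.
exact: esum_ge0.
Qed.

Lemma rrE : (rr%:E = rel_sep (R:=R) mul Q lam).
Proof. by rewrite /rr fineK // ge0_fin_numE ?rel_ge0. Qed.

Lemma mqE : mq%:E = mu Q.
Proof. by rewrite /mq fineK // muQ_fin. Qed.

Lemma mq_gt0 : 0 < mq.
Proof. by rewrite -lte_fin mqE muQ_pos. Qed.

Lemma count_le (X : set I) (P : I -> bool) (x : G) : finite_set X ->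
  (forall i, X i -> P i -> lcoset mul x Q (lam i)) ->
  \sum_(i \in X) ((P i)%:R : R) <= rr.
Proof.
move=> fX HP; rewrite -lee_fin rrE -fsumEFin //.
have -> : (\sum_(i \in X) (((P i)%:R : R))%:E)%R = (\sum_(i \in X `&` [set i | P i]) (1%E : \bar R))%R.
  rewrite fsbig_mkcondr; apply: eq_fsbigr => i _.
  by case: (boolP (P i)) => Pi; [rewrite mem_set | rewrite memNset //= (negbTE Pi)].
rewrite /rel_sep; apply: le_trans (ereal_sup_ubound _); last by exists x.
apply: esum_ge; exists (X `&` [set i | P i]) => //; split.
  exact: finite_setIl.
by move=> i [Xi /HP]; apply.
Qed.

Lemma rr_ge1 (i : I) : 1 <= rr.
Proof.
have := @count_le [set i] (fun j => j == i) (lam i) (finite_set1 i).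
rewrite fsbig_set1 eqxx; apply => j _ /eqP ->.
by exists e => //; rewrite (g1r HG).
Qed.

Lemma rr_ge0 : 0 <= rr.
Proof. by rewrite -lee_fin rrE rel_ge0. Qed.

Lemma part1_gen (y : G) (a : I -> R) (g : G -> \bar R) :
  (forall i, 0 <= a i) -> (forall w, (0 <= g w)%E) ->
  (forall i w, Q (mul (inv (mul (inv y) (lam i))) w) -> ((a i)%:E <= g w)%E) ->
  (\esum_(i in [set: I]) (a i)%:E <= (rr / mq)%:E * \int[mu]_w g w)%E.
Proof.
move=> a0 g0 Hag.
pose U := fun i => mul (inv (mul (inv y) (lam i))) @^-1` Q.
have oU i : open (U i).
  by apply: open_comp => // z _; apply: (cont_mull HG).
have mU i : measurable (U i : set (Borel G)) by apply: open_meas.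
have muU i : mu (U i) = mu Q by apply: Hinv.
have cnt w (X : set I) : finite_set X -> \sum_(i \in X) ((w \in U i)%:R : R) <= rr.
  move=> fX; apply: (@count_le X _ (mul y w)) => // i _ /set_mem Hw; rewrite /U /= in Hw.
  exists (inv (mul (inv (mul (inv y) (lam i))) w)); first exact: (Qsym _).1 Hw.
  rewrite (ginvM HG) (ginvK HG) -(gA HG) (gKV HG) (gKV HG) //.
have ig0 : (0 <= \int[mu]_w g w)%E by apply: integral_ge0 => w _.
have rm0 : 0 <= rr / mq by rewrite divr_ge0 ?rr_ge0 // ltW // mq_gt0.
apply: ge_ereal_sup => _ [X [finX _] <-].
case: (ltrP 0 rr) => r0; last first.
  rewrite fsbig1 ?mule_ge0 // => i _; exfalso; have := rr_ge1 i.
  by rewrite leNgt (le_lt_trans r0) // ltr01.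
have mq0 := mq_gt0.
have key : (\sum_(i \in X) (a i)%:E)%R = ((rr/mq)%:E * (\sum_(i \in X) ((a i / rr) * mq)%:E)%R)%E.
  rewrite !fsumEFin // -EFinM; congr EFin; rewrite mulr_fsumr; apply: eq_fsbigr => i _.
  by field; apply/andP; split; apply: lt0r_neq0.
rewrite key; apply: lee_wpmul2l; first by rewrite lee_fin.
have -> : (\sum_(i \in X) ((a i / rr) * mq)%:E)%R =
    (\int[mu]_w (\sum_(i \in X) ((a i / rr)%:E * (\1_(U i) w)%:E)%E)%R)%E.
  rewrite fsbig_finite //; under eq_integral do rewrite fsbig_finite //.
  rewrite ge0_integral_sum //; last first.
  - move=> i w _; apply: mule_ge0; rewrite lee_fin ?indicE //.
    by rewrite divr_ge0 ?a0 ?rr_ge0.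
  - by move=> i; apply: measurable_funeM; apply: measurableT_comp => //.
  apply: eq_bigr => i _.
  rewrite ge0_integralZl_EFin //.
  - by rewrite integral_indic // setIT muU -mqE EFinM.
  all: try by move=> w _; rewrite lee_fin indicE.
  by apply: measurableT_comp => //; exact: (measurable_indic _ (mU i)).
  by apply: divr_ge0; [exact: a0 | exact: rr_ge0].
apply: le_int_nm.
  move=> w; apply: fsume_ge0 => i _; apply: mule_ge0; rewrite lee_fin ?indicE //.
  by rewrite divr_ge0 ?a0 ?rr_ge0.
move=> w; case E : (g w) => [gw| |]; last 2 first.
- exact: leey.
- by have := g0 w; rewrite E.
have gw0 : 0 <= gw by rewrite -lee_fin -E.
under eq_fsbigr do rewrite -EFinM.
rewrite fsumEFin // lee_fin.
apply: (@le_trans _ _ (\sum_(i \in X) gw / rr * ((w \in U i)%:R : R))).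
  rewrite !fsbig_finite //; apply: ler_sum => i _; rewrite indicE.
  case: (boolP (w \in U i)) => wU; last by rewrite !mulr0.
  rewrite !mulr1 ler_pM2r ?invr_gt0 //.
  by rewrite -lee_fin -E; apply: Hag; move: wU; rewrite inE.
rewrite -mulr_fsumr.
apply: (@le_trans _ _ (gw / rr * rr)); last by rewrite divfK ?lt0r_neq0.
by apply: ler_wpM2l; [apply: divr_ge0 => //; apply: ltW | exact: cnt].
Qed.

Lemma lcosetE x : lcoset mul x Q = mul (inv x) @^-1` Q.
Proof.
apply/seteqP; split => z /=.
  by case=> q Qq <-; rewrite (gK HG).
by move=> Qz; exists (mul (inv x) z) => //; rewrite (gKV HG).
Qed.

Lemma rcosetE x : rcoset mul Q x = (fun z => mul z (inv x)) @^-1` Q.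
Proof.
apply/seteqP; split => z /=.
  by case=> q Qq <-; rewrite (gKr HG).
by move=> Qz; exists (mul z (inv x)) => //; rewrite (gKVr HG).
Qed.

Lemma open_lcoset x : open (lcoset mul x Q).
Proof. by rewrite lcosetE; apply: open_comp => // z _; apply: (cont_mull HG). Qed.

Lemma open_rcoset x : open (rcoset mul Q x).
Proof. by rewrite rcosetE; apply: open_comp => // z _; apply: (cont_mulr HG). Qed.

Lemma MQ_ge (f : G -> R) w z : continuous f -> lcoset mul w Q z ->
  ((`|f z|)%:E <= MQ mul mu Q f w)%E.
Proof. by move=> cf H; apply: esssup_ge => //; exact: open_lcoset. Qed.

Lemma MQR_ge (f : G -> R) w z : continuous f -> rcoset mul Q w z ->
  ((`|f z|)%:E <= MQR mul mu Q f w)%E.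
Proof. by move=> cf H; apply: esssup_ge => //; exact: open_rcoset. Qed.

Lemma MQ_ge0 (f : G -> R) w : continuous f -> (0 <= MQ mul mu Q f w)%E.
Proof.
move=> cf; apply: le_trans (MQ_ge cf _); first by rewrite lee_fin.
by exists e => //; rewrite (g1r HG).
Qed.

Lemma MQR_ge0 (f : G -> R) w : continuous f -> (0 <= MQR mul mu Q f w)%E.
Proof.
move=> cf; apply: le_trans (MQR_ge cf _); first by rewrite lee_fin.
by exists e => //; rewrite (g1l HG).
Qed.

Lemma geom1 y i w : Q (mul (inv (mul (inv y) (lam i))) w) ->
  lcoset mul w Q (mul (inv y) (lam i)).
Proof.
set b := mul (inv y) (lam i) => Hq.
exists (inv (mul (inv b) w)); first exact: (Qsym _).1 Hq.
by rewrite (ginvM HG) (ginvK HG) (gA HG) (gVr HG) (g1l HG).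
Qed.

Lemma geom2 x y i w : Q (mul (inv (mul (inv y) (lam i))) w) ->
  rcoset mul Q (mul (inv w) (mul (inv y) x)) (mul (inv (lam i)) x).
Proof.
set b := mul (inv y) (lam i) => Hq.
exists (mul (inv b) w) => //.
rewrite -(gA HG) (gA HG w) (gVr HG) (g1l HG) /b (ginvM HG) (ginvK HG).
by rewrite -(gA HG) (gA HG y) (gVr HG) (g1l HG).
Qed.

Lemma part1a (Phi Psi : G -> R) : continuous Phi -> continuous Psi ->
  (forall x, 0 <= Phi x) -> (forall x, 0 <= Psi x) ->
  forall x y : G,
    (\esum_(i in [set: I]) (Phi (mul (inv (lam i)) x) * Psi (mul (inv y) (lam i)))%:E
     <= (rr / mq)%:E * haar_conv mul inv mu (MQ mul mu Q Psi) (MQR mul mu Q Phi) (mul (inv y) x))%E.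
Proof.
move=> cPhi cPsi Phi0 Psi0 x y; rewrite /haar_conv.
apply: (part1_gen (y:=y) (a:=fun i => Phi (mul (inv (lam i)) x) * Psi (mul (inv y) (lam i)))
  (g:=fun w => (MQ mul mu Q Psi w * MQR mul mu Q Phi (mul (inv w) (mul (inv y) x)))%E)).
- by move=> i; rewrite mulr_ge0.
- by move=> w; rewrite mule_ge0 ?MQ_ge0 ?MQR_ge0.
move=> i w Hq; rewrite mulrC EFinM.
apply: lee_pmul; rewrite ?lee_fin //.
  by apply: le_trans (MQ_ge cPsi (geom1 Hq)); rewrite lee_fin ger0_norm.
by apply: le_trans (MQR_ge cPhi (geom2 x Hq)); rewrite lee_fin ger0_norm.
Qed.

Lemma part1b (Psi : G -> R) : continuous Psi -> (forall x, 0 <= Psi x) ->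
  forall y : G,
    (\esum_(i in [set: I]) (Psi (mul (inv y) (lam i)))%:E
     <= (rr / mq)%:E * WLnorm mul mu Q Psi)%E.
Proof.
move=> cPsi Psi0 y; rewrite /WLnorm.
apply: (part1_gen (y:=y) (a:=fun i => Psi (mul (inv y) (lam i))) (g:=MQ mul mu Q Psi)) => //.
- by move=> w; rewrite MQ_ge0.
move=> i w Hq.
by apply: le_trans (MQ_ge cPsi (geom1 Hq)); rewrite lee_fin ger0_norm.
Qed.

Lemma fin_lcoset x : finite_set [set i | lcoset mul x Q (lam i)].
Proof.
apply: contrapT => /infinite_set_fset H.
have [B BS Bn] := H (Num.trunc rr).+1.
have := @count_le _ (fun i => true) x (finite_fset B).
rewrite fsbig_finite //= set_fsetK -natr_sum -card_fset_sum1.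
move=> /(_ _)/wrap[].
  by move=> i iB _; apply: BS.
move=> Hle; have := truncnS_gt rr; rewrite ltNge => /negP; apply.
by apply: le_trans Hle; rewrite ler_nat.
Qed.

Lemma I_countable : exists h : I -> nat, injective h.
Proof.
case: HG => _ [_ [_ [_ [_ [_ [_ [K [cK KT]]]]]]]].
have cov n : exists S : set G, finite_set S /\ K n `<=` \bigcup_(x in S) lcoset mul x Q.
  have := cK n; rewrite compact_cover => /(_ G (K n) (fun x => lcoset mul x Q)).
  case.
  - by move=> x _; exact: open_lcoset.
  - by move=> x Kx; exists x => //; exists e => //; rewrite (g1r HG).
  by move=> D' _ HD'; eexists; split; last exact: HD'; exact: finite_fset.
pose D n := projT1 (cid (cov n)).
have HD n : finite_set (D n) /\ K n `<=` \bigcup_(x in D n) lcoset mul x Q.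
  by rewrite /D; case: (cid (cov n)).
have : countable [set: I].
  apply: (@sub_countable _ _ _ (\bigcup_(n in [set: nat])
            \bigcup_(x in D n) [set i | lcoset mul x Q (lam i)])).
    apply: subset_card_le => i _.
    have : [set: G] (lam i) by [].
    rewrite -KT => -[n _ Kn].
    have [_ /(_ _ Kn) [x Dx Hx]] := HD n.
    by exists n => //; exists x.
  apply: bigcup_countable => // n _.
  apply: bigcup_countable; first by apply: finite_set_countable; case: (HD n).
  by move=> x _; apply: finite_set_countable; exact: fin_lcoset.
move/countable_injP => [h hinj]; exists h => i j hij; apply: hinj; rewrite ?inE //.
Qed.

Lemma meas_mull a : measurable_fun [set: Borel G] (mul a : Borel G -> Borel G).
Proof.
apply: (@measurability _ _ (Borel G) (Borel G) _ _ (@open G)); first by [].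
move=> _ [B oB <-]; rewrite setTI; apply: open_meas.
by apply: open_comp => // z _; apply: (cont_mull HG).
Qed.

Lemma integral_transl (a : G) (f : G -> \bar R) : measurable_fun [set: Borel G] f ->
  (forall x, (0 <= f x)%E) -> (\int[mu]_x f (mul a x) = \int[mu]_x f x)%E.
Proof.
move=> mf f0.
have := @ge0_integral_pushforward _ _ _ _ _ _ (meas_mull a) mu setT f measurableT mf (fun y _ => f0 y).
rewrite preimage_setT => <-.
apply: eq_measure_integral; try exact: meas_mull.
by move=> mm A mA _; exact: (Hinv a mA).
Qed.

Lemma part2 (Theta : G -> R[i]) :
  ccontinuous Theta -> cmeasurable Theta -> (\int[mu]_x (cabs (Theta x))%:E < +oo)%E ->
  in_WL mul mu Q (fun x => cabs (Theta (inv x))) ->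
  forall c : I -> R[i],
    (\esum_(i in [set: I]) ((cabs (c i)) ^+ 2)%:E < +oo)%E ->
    {ae mu, forall x : Borel G,
       (\esum_(i in [set: I]) (cabs (c i * Theta (mul (inv (lam i)) x)))%:E < +oo)%E} /\
    exists F : G -> R[i],
      cmeasurable F /\
      {ae mu, forall x : Borel G,
         F x = csum (fun i => c i * Theta (mul (inv (lam i)) x))} /\
      (\int[mu]_x ((cabs (F x)) ^+ 2)%:E
       <= (rr / mq)%:E * (\int[mu]_x (cabs (Theta x))%:E)
            * WLnorm mul mu Q (fun x => cabs (Theta (inv x)))
            * \esum_(i in [set: I]) ((cabs (c i)) ^+ 2)%:E)%E.
Proof.
move=> cT mT iT wT c hc.
have [h hinj] := I_countable.
pose Psi x := cabs (Theta (inv x)).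
have cPsi : continuous Psi.
  move=> x; apply: (@continuous_comp _ _ _ inv (fun y => cabs (Theta y))).
    exact: (cont_inv HG).
  exact: cabs_cont.
have Psi0 x : 0 <= Psi x by exact: cabs_ge0.
pose al i x := cabs (Theta (mul (inv (lam i)) x)).
have al0 i x : 0 <= al i x by exact: cabs_ge0.
have alPsi i x : al i x = Psi (mul (inv x) (lam i)).
  by rewrite /Psi /al (ginvM HG) (ginvK HG).
pose W := WLnorm mul mu Q Psi.
have W0 : (0 <= W)%E by apply: integral_ge0 => x _; exact: MQ_ge0.
have Wfin : (W < +oo)%E by case: wT.
have WE : W = (fine W)%:E by rewrite fineK // ge0_fin_numE.
pose B := rr / mq * fine W.
have B0 : 0 <= B.
  apply: mulr_ge0; first by apply: divr_ge0; [exact: rr_ge0 | apply: ltW; exact: mq_gt0].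
  exact: fine_ge0.
have Sb x : (\esum_(i in [set: I]) (al i x)%:E <= B%:E)%E.
  have H := part1b cPsi Psi0 x.
  have -> : B%:E = ((rr / mq)%:E * W)%E by rewrite [in RHS]WE -EFinM.
  apply: le_trans H; apply: le_esum => i _.
  by rewrite alPsi.
have Sfin x : (\esum_(i in [set: I]) (al i x)%:E < +oo)%E.
  by apply: le_lt_trans (Sb x) _; rewrite ltry.
have alB i x : al i x <= B.
  rewrite -lee_fin; apply: le_trans (Sb x); apply: esum_ge.
  exists [set i]; first by split; [exact: finite_set1|].
  by rewrite fsbig_set1.
pose c2 i := cabs (c i) ^+ 2.
have c20 i : 0 <= c2 i by rewrite /c2 sqr_ge0.
pose z i x := c i * Theta (mul (inv (lam i)) x).
have cz i x : cabs (z i x) = cabs (c i) * al i x by rewrite /z cabsM.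
have Xfin x : (\esum_(i in [set: I]) (cabs (z i x))%:E < +oo)%E.
  apply: (@esum_fin_le _ _ _ (fun i => al i x + B * c2 i)).
  - by move=> i; exact: cabs_ge0.
  - by move=> i; rewrite cz; apply: bnd_pt => //; exact: cabs_ge0.
  rewrite (eq_esum (b := fun i => (al i x)%:E + (B * c2 i)%:E)) //.
  rewrite esumD; [|by move=> i _; rewrite lee_fin..|by move=> i _; rewrite lee_fin mulr_ge0].
  by rewrite lte_add_pinfty // (esumZ_fin hinj).
split.
  by apply: aeW => x; exact: Xfin.
have mRT i : measurable_fun [set: Borel G] (fun x => complex.Re (Theta (mul (inv (lam i)) x))).
  exact: (measurableT_comp mT.1 (meas_mull _)).
have mIT i : measurable_fun [set: Borel G] (fun x => complex.Im (Theta (mul (inv (lam i)) x))).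
  exact: (measurableT_comp mT.2 (meas_mull _)).
have ReM (a b : R[i]) : complex.Re (a * b) = complex.Re a * complex.Re b - complex.Im a * complex.Im b.
  by case: a; case: b.
have ImM (a b : R[i]) : complex.Im (a * b) = complex.Re a * complex.Im b + complex.Im a * complex.Re b.
  by case: a; case: b.
have mRz i : measurable_fun [set: Borel G] (fun x => complex.Re (z i x)).
  rewrite /z; under eq_fun do rewrite ReM.
  by apply: measurable_funB; apply: measurable_funM => //.
have mIz i : measurable_fun [set: Borel G] (fun x => complex.Im (z i x)).
  rewrite /z; under eq_fun do rewrite ImM.
  by apply: measurable_funD; apply: measurable_funM => //.
have mrsum (u : I -> G -> R) : (forall i, measurable_fun [set: Borel G] (u i)) ->
    measurable_fun [set: Borel G] (fun x => rsum (fun i => u i x)).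
  move=> mu_; rewrite /rsum; apply: measurable_funB.
  - apply: measurableT_comp (fine_measurable measurableT) _.
    apply: (esum_measurable hinj) => i.
      by move=> x; rewrite lee_fin maxp_ge0.
    by apply/measurable_EFinP; apply: measurable_maxr.
  - apply: measurableT_comp (fine_measurable measurableT) _.
    apply: (esum_measurable hinj) => i.
      by move=> x; rewrite lee_fin maxp_ge0.
    by apply/measurable_EFinP; apply: measurable_maxr => //; apply: measurable_funN.
have mal i : measurable_fun [set: Borel G] (al i) by exact: cabs_meas.
exists (fun x => csum (fun i => z i x)); split; [|split].
- by split; [exact: (mrsum (fun i x => complex.Re (z i x)))|exact: (mrsum (fun i x => complex.Im (z i x)))].
- by apply: aeW.
pose T x := (\esum_(i in [set: I]) (c2 i * al i x)%:E)%E.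
have T0 x : (0 <= T x)%E by apply: esum_ge0 => i _; rewrite lee_fin mulr_ge0.
have Tfin x : (T x < +oo)%E.
  apply: (@esum_fin_le _ _ _ (fun i => B * c2 i)).
  - by move=> i; rewrite mulr_ge0.
  - by move=> i; rewrite mulrC ler_wpM2r.
  exact: (esumZ_fin hinj).
have pt x : (((cabs (csum (fun i => z i x))) ^+ 2)%:E <= B%:E * T x)%E.
  have TE : T x = (fine (T x))%:E by rewrite fineK // ge0_fin_numE.
  rewrite TE -EFinM lee_fin.
  set Xr := fine (\esum_(i in [set: I]) (cabs (z i x))%:E).
  have Xr0 : 0 <= Xr by apply: fine_esum_ge0 => i; exact: cabs_ge0.
  have cb : cabs (csum (fun i => z i x)) <= Xr by exact: (csum_bound hinj (Xfin x)).
  apply: (@le_trans _ _ (Xr ^+ 2)).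
    by rewrite !expr2; apply: ler_pM => //; exact: cabs_ge0.
  apply: amgm_sq => //; first by apply: fine_ge0.
  move=> t t0.
  have t0' : 0 <= t by exact: ltW.
  have ti0 : 0 <= t^-1 by rewrite invr_ge0.
  have tal i : 0 <= t * al i x + t^-1 * (c2 i * al i x).
    by apply: addr_ge0; apply: mulr_ge0 => //; exact: mulr_ge0.
  rewrite /Xr -(fine_esumZ hinj) //; last by move=> i; exact: cabs_ge0.
  apply: (@le_trans _ _ (fine (\esum_(i in [set: I]) (t * al i x + t^-1 * (c2 i * al i x))%:E))).
    apply: fine_le.
    - rewrite ge0_fin_numE; last by apply: esum_ge0 => i _; rewrite lee_fin mulr_ge0 // cabs_ge0.
      by apply: (esumZ_fin hinj) => // i; exact: cabs_ge0.
    - rewrite ge0_fin_numE; last by apply: esum_ge0 => i _; rewrite lee_fin.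
      apply: (@esum_fin_le _ _ _ (fun i => t * al i x + t^-1 * (c2 i * al i x))) => //.
      rewrite (eq_esum (b := fun i => (t * al i x)%:E + (t^-1 * (c2 i * al i x))%:E)) //.
      rewrite esumD; last 2 first.
      + by move=> i _; rewrite lee_fin mulr_ge0.
      + by move=> i _; rewrite lee_fin mulr_ge0 // mulr_ge0.
      rewrite lte_add_pinfty //; apply: (esumZ_fin hinj) => //; try exact: (Tfin x).
      by move=> i; exact: mulr_ge0.
    apply: le_esum => i _; rewrite lee_fin cz /c2.
    by rewrite [t^-1 * _]mulrC; exact: (amgm_pt (cabs (c i)) (al0 i x) t0).
  have fS : (\esum_(i in [set: I]) (t * al i x)%:E < +oo)%E.
    exact: (esumZ_fin hinj t0' (al0^~ x) (Sfin x)).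
  have fT : (\esum_(i in [set: I]) (t^-1 * (c2 i * al i x))%:E < +oo)%E.
    exact: (esumZ_fin hinj ti0 (fun i => mulr_ge0 (c20 i) (al0 i x)) (Tfin x)).
  rewrite (fine_esumD (fun i => mulr_ge0 t0' (al0 i x))
     (fun i => mulr_ge0 ti0 (mulr_ge0 (c20 i) (al0 i x))) fS fT).
  rewrite (fine_esumZ hinj t0' (al0^~ x) (Sfin x)).
  rewrite (fine_esumZ hinj ti0 (fun i => mulr_ge0 (c20 i) (al0 i x)) (Tfin x)).
  apply: lerD; last by rewrite mulrC.
  rewrite ler_wpM2l // -lee_fin; apply: le_trans (Sb x).
  by rewrite fineK // ge0_fin_numE // esum_ge0 // => i _; rewrite lee_fin.
pose M := (\int[mu]_x (cabs (Theta x))%:E)%E.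
have M0 : (0 <= M)%E by apply: integral_ge0 => x _; rewrite lee_fin cabs_ge0.
have ME : M = (fine M)%:E by rewrite fineK // ge0_fin_numE.
pose C2 := (\esum_(i in [set: I]) (c2 i)%:E)%E.
have C20 : (0 <= C2)%E by apply: esum_ge0 => i _; rewrite lee_fin.
have CE : C2 = (fine C2)%:E by rewrite fineK // ge0_fin_numE.
have mTh : measurable_fun [set: Borel G] (fun y => (cabs (Theta y))%:E).
  by apply/measurable_EFinP; apply: cabs_meas; [exact: mT.1|exact: mT.2].
have mcal i : measurable_fun [set: Borel G] (fun x => (c2 i * al i x)%:E).
  by apply/measurable_EFinP; apply: measurable_funM.
have mT' : measurable_fun [set: Borel G] T.
  apply: (esum_measurable hinj) => //.
  by move=> i x; rewrite lee_fin mulr_ge0.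
have IT : (\int[mu]_x T x = (fine M)%:E * C2)%E.
  rewrite /T (integral_esum hinj) //; last by move=> i x; rewrite lee_fin mulr_ge0.
  rewrite /C2 -(esumZ hinj); [|exact: fine_ge0|by move=> i; rewrite lee_fin].
  apply: eq_esum => i _.
  under eq_integral do rewrite EFinM.
  rewrite ge0_integralZl_EFin //; last 2 first.
  - by move=> x _; rewrite lee_fin.
  - by apply/measurable_EFinP.
  rewrite -ME muleC; congr (_ * _)%E.
  exact: (integral_transl (inv (lam i)) mTh (fun y => cabs_ge0 (Theta y))).
apply: (@le_trans _ _ (\int[mu]_x (B%:E * T x))%E).
  apply: le_int_nm => x; last exact: pt.
  by rewrite lee_fin sqr_ge0.
rewrite ge0_integralZl_EFin //; try by move=> x _; exact: T0.
rewrite IT -/M -/C2 -/W ME CE WE -!EFinM lee_fin /B.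
by rewrite le_eqVlt; apply/orP; left; apply/eqP; ring.
Qed.
End Part1.


Unset Implicit Arguments. Set Strict Implicit.

Theorem lemma2p4 (R : realType) (G : ptopologicalType)
  (mul : G -> G -> G) (inv : G -> G) (e : G)
  (mu : {measure set (Borel G) -> \bar R}) (Q : set G)
  (I : choiceType) (lam : I -> G) :
  lcsc_group mul inv e ->
  left_haar mul mu ->
  good_nbhd inv e Q ->
  (@rel_sep R G mul Q I lam < +oo)%E ->
  let K : R := fine (rel_sep mul Q lam) / fine (mu Q) in
  (forall Phi Psi : G -> R,
     continuous Phi -> continuous Psi ->
     (forall x, 0 <= Phi x) -> (forall x, 0 <= Psi x) ->
     (forall x y : G,
        (\esum_(i in [set: I]) (Phi (mul (inv (lam i)) x) * Psi (mul (inv y) (lam i)))%:E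
         <= K%:E * haar_conv mul inv mu (MQ mul mu Q Psi) (MQR mul mu Q Phi) (mul (inv y) x))%E) /\
     (forall y : G,
        (\esum_(i in [set: I]) (Psi (mul (inv y) (lam i)))%:E
         <= K%:E * WLnorm mul mu Q Psi)%E)) /\
  (forall Theta : G -> R[i],
     ccontinuous Theta ->
     cmeasurable Theta -> (\int[mu]_x (cabs (Theta x))%:E < +oo)%E ->
     in_WL mul mu Q (fun x => cabs (Theta (inv x))) ->
     forall c : I -> R[i],
       (\esum_(i in [set: I]) ((cabs (c i)) ^+ 2)%:E < +oo)%E ->
       {ae mu, forall x : Borel G,
          (\esum_(i in [set: I]) (cabs (c i * Theta (mul (inv (lam i)) x)))%:E < +oo)%E} /\
       exists F : G -> R[i],
         cmeasurable F /\
         {ae mu, forall x : Borel G,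
            F x = csum (fun i => c i * Theta (mul (inv (lam i)) x))} /\
         (\int[mu]_x ((cabs (F x)) ^+ 2)%:E
          <= K%:E * (\int[mu]_x (cabs (Theta x))%:E)
               * WLnorm mul mu Q (fun x => cabs (Theta (inv x)))
               * \esum_(i in [set: I]) ((cabs (c i)) ^+ 2)%:E)%E).
Proof.
move=> HG HH HQ Hrel K.
split.
  move=> Phi Psi cPhi cPsi Phi0 Psi0; split.
    move=> x y; exact: (part1a HG HH HQ Hrel cPhi cPsi Phi0 Psi0 x y).
  by move=> y; exact: (part1b HG HH HQ Hrel cPsi Psi0 y).
move=> Theta cT mT iT wT c hc.
exact: (part2 HG HH HQ Hrel cT mT iT wT hc).
Qed.
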